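(* Let $\pi\sqrt2<L<M$. Then there is at most one $t\in(0,L)$ with $z_M(t)=z_L(t)$.
   Context: For $\alpha\in(0,1/\sqrt2)$ let $L_\alpha=\pi/\mathrm{AGM}(\alpha,\tfrac12\sqrt{1+2\alpha^2})$; $\alpha\mapsto L_\alpha$ is a decreasing bijection from $(0,1/\sqrt2)$ onto $(\pi\sqrt2,\infty)$. For $L>\pi\sqrt2$ let $\alpha$ satisfy $L_\alpha=L$ and let $x_0>y_0>0$ satisfy $x_0^2+y_0^2=1$, $x_0y_0=\alpha^2$. Let $(x_L,y_L,z_L)(t)$ solve $x'=-xz$, $y'=yz$, $z'=x^2-y^2$ ($'=d/dt$) with initial value $(x_0,y_0,0)$. *)

(* Defs.v *)
From Stdlib Require Import Reals Lra.
From Coquelicot Require Import Coquelicot.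
Open Scope R_scope.

Fixpoint agm_iter (a b : R) (n : nat) : R * R :=
  match n with
  | O => (a, b)
  | S k => let p := agm_iter a b k in
           ((fst p + snd p) / 2, sqrt (fst p * snd p))
  end.

Definition AGM (a b : R) : R :=
  real (Lim_seq (fun n => fst (agm_iter a b n))).

Definition L_of (alpha : R) : R :=
  PI / AGM alpha (/ 2 * sqrt (1 + 2 * alpha ^ 2)).

Definition solves_system (x y z : R -> R) : Prop :=
  forall t : R,
    derivable_pt_lim x t (- (x t * z t)) /\
    derivable_pt_lim y t (y t * z t) /\
    derivable_pt_lim z t (x t ^ 2 - y t ^ 2).

Definition is_sol_L (L : R) (x y z : R -> R) : Prop :=
  exists alpha x0 y0 : R,
    0 < alpha /\ alpha < / sqrt 2 /\ L_of alpha = L /\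
    x0 > y0 /\ y0 > 0 /\ x0 ^ 2 + y0 ^ 2 = 1 /\ x0 * y0 = alpha ^ 2 /\
    x 0 = x0 /\ y 0 = y0 /\ z 0 = 0 /\
    solves_system x y z.

(* Main.v *)
Require Import Defs.
From Stdlib Require Import Reals.
From Stdlib Require Import Lra Psatz Nsatz Ranalysis5 IndefiniteDescription.
From Coquelicot Require Import Coquelicot.
Open Scope R_scope.

Lemma FTC0 (f : R -> R) (Hc : forall x, continuous f x) x :
  derivable_pt_lim (fun y => RInt f 0 y) x (f x).
Proof.
  apply is_derive_Reals.
  apply (is_derive_RInt f (fun y => RInt f 0 y) 0 x).
  - apply filter_forall. intros y. apply (RInt_correct (V:=R_CompleteNormedModule)).
    apply ex_RInt_continuous. intros; apply Hc.
  - apply Hc.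
Qed.

Definition hh (a b p : R) := a^2 * cos p ^2 + b^2 * sin p ^2.
Definition FF a b p := / sqrt (hh a b p).
Definition TT a b x := RInt (FF a b) 0 x.

Lemma hh_pos a b p : 0 < a -> 0 < b -> 0 < hh a b p.
Proof.
  intros Ha Hb. unfold hh. pose proof (sin2_cos2 p). unfold Rsqr in H.
  destruct (Req_dec (cos p) 0) as [E|E].
  - rewrite E in *. assert (sin p * sin p = 1) by lra.
    replace (sin p ^2) with 1 by (simpl; lra). simpl.
    assert (0 < b*b) by nra. lra.
  - assert (0 < cos p * cos p) by (apply Rsqr_pos_lt; auto).
    assert (0 <= sin p * sin p) by nra. simpl.
    assert (0 < a*a) by nra. assert (0 <= b*b) by nra.
    apply Rplus_lt_le_0_compat.
    + replace (a * (a * 1) * (cos p * (cos p * 1))) with ((a*a)*(cos p * cos p)) by ring.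
      now apply Rmult_lt_0_compat.
    + replace (b * (b * 1) * (sin p * (sin p * 1))) with ((b*b)*(sin p * sin p)) by ring.
      now apply Rmult_le_pos.
Qed.

Lemma FF_ex_derive a b p : 0 < a -> 0 < b -> ex_derive (FF a b) p.
Proof.
  intros Ha Hb. unfold FF, hh. auto_derive.
  pose proof (hh_pos a b p Ha Hb). unfold hh in H.
  split; [lra|]. split; [|auto].
  apply Rgt_not_eq. apply sqrt_lt_R0. lra.
Qed.

Lemma FF_cont a b p : 0 < a -> 0 < b -> continuous (FF a b) p.
Proof. intros. apply (ex_derive_continuous (FF a b)). now apply FF_ex_derive. Qed.

Lemma TT_deriv a b x : 0 < a -> 0 < b -> derivable_pt_lim (TT a b) x (FF a b x).
Proof. intros. unfold TT. apply FTC0. intros; now apply FF_cont. Qed.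


Definition U1 a b x := (a * cos x ^2 - b * sin x ^2) / sqrt (hh a b x).
Definition U2 a b x := (a + b) * sin x * cos x / sqrt (hh a b x).

Lemma U1_deriv a b x : 0 < a -> 0 < b ->
  is_derive (U1 a b) x (- (1 + a*b / hh a b x) * U2 a b x).
Proof.
  intros Ha Hb. pose proof (hh_pos a b x Ha Hb) as Hh.
  unfold U1, U2. unfold hh in *. auto_derive.
  { split. lra. split; auto. apply Rgt_not_eq. apply sqrt_lt_R0. lra. }
  replace (a ^ 2 * cos x ^ 2 + b ^ 2 * sin x ^ 2) with (a * (a * 1) * (cos x * (cos x * 1)) + b * (b * 1) * (sin x * (sin x * 1))) by ring.
  replace (a ^ 2 * cos x ^ 2 + b ^ 2 * sin x ^ 2) with (a * (a * 1) * (cos x * (cos x * 1)) + b * (b * 1) * (sin x * (sin x * 1))) in Hh by ring.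
  set (E := a * (a * 1) * (cos x * (cos x * 1)) + b * (b * 1) * (sin x * (sin x * 1))) in *.
  assert (Hr : sqrt E * sqrt E = E) by (apply sqrt_sqrt; lra).
  assert (Hr0 : 0 < sqrt E) by (apply sqrt_lt_R0; lra).
  pose proof (sin2_cos2 x) as Hsc. unfold Rsqr in Hsc.
  set (r := sqrt E) in *. clearbody r. unfold E in *. clear E.
  field_simplify_eq; try lra.
  assert (Hr2 : r^2 = a * (a * 1) * (cos x * (cos x * 1)) + b * (b * 1) * (sin x * (sin x * 1))) by (rewrite <- Hr; ring).
  rewrite Hr2. clear Hr Hr2 Hr0 Hh. simpl. nsatz.
Qed.


Lemma mvt_const (f : R -> R) a b :
  a <= b -> (forall c, a <= c <= b -> derivable_pt_lim f c 0) -> f a = f b.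
Proof.
  intros Hab H. destruct (Req_dec a b) as [E|E]; [subst; auto|].
  destruct (MVT_cor2 f (fun _ => 0) a b) as [c [Hc _]]; [lra|auto|].
  lra.
Qed.

Lemma mvt_incr (f df : R -> R) a b :
  a <= b -> (forall c, a <= c <= b -> derivable_pt_lim f c (df c)) ->
  (forall c, a <= c <= b -> 0 <= df c) -> f a <= f b.
Proof.
  intros Hab H Hp. destruct (Req_dec a b) as [E|E]; [subst; lra|].
  destruct (MVT_cor2 f df a b) as [c [Hc Hc2]]; [lra|auto|].
  assert (0 <= df c) by (apply Hp; lra). nra.
Qed.

Lemma mvt_strict (f df : R -> R) a b :
  a < b -> (forall c, a <= c <= b -> derivable_pt_lim f c (df c)) ->
  (forall c, a <= c <= b -> 0 < df c) -> f a < f b.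
Proof.
  intros Hab H Hp.
  destruct (MVT_cor2 f df a b) as [c [Hc Hc2]]; [lra|auto|].
  assert (0 < df c) by (apply Hp; lra). nra.
Qed.

Lemma D_comp_lin (f : R -> R) c s x l :
  derivable_pt_lim f (c + s * x) l ->
  derivable_pt_lim (fun y => f (c + s * y)) x (s * l).
Proof.
  intros H.
  assert (Hl : derivable_pt_lim (fun y => c + s * y) x s).
  { apply is_derive_Reals. auto_derive; auto. ring. }
  pose proof (derivable_pt_lim_comp (fun y => c + s * y) f x s l Hl H) as K.
  unfold comp in K. replace (s * l) with (l * s) by ring. exact K.
Qed.

Lemma TT_0 a b : TT a b 0 = 0.
Proof. unfold TT. apply (RInt_point (V:=R_CompleteNormedModule)). Qed.

Lemma hh_PI_minus a b x : hh a b (PI - x) = hh a b x.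
Proof. unfold hh. rewrite sin_PI_x. replace (cos (PI - x)) with (- cos x). ring.
  rewrite cos_minus, cos_PI, sin_PI. ring. Qed.

Lemma hh_plus_PI a b x : hh a b (x + PI) = hh a b x.
Proof. unfold hh. rewrite neg_sin, neg_cos. ring. Qed.

Lemma hh_shift a b x : hh b a (PI/2 - x) = hh a b x.
Proof. unfold hh. rewrite sin_shift, cos_shift. ring. Qed.

Lemma TT_PI_minus a b x : 0 < a -> 0 < b -> 0 <= x ->
  TT a b (PI - x) = TT a b PI - TT a b x.
Proof.
  intros Ha Hb Hx.
  assert (TT a b (PI + -1 * 0) + TT a b 0 = TT a b (PI + -1 * x) + TT a b x).
  { apply mvt_const with (f := fun y => TT a b (PI + -1 * y) + TT a b y); auto.
    intros c _. replace 0 with (-1 * FF a b (PI + -1 * c) + FF a b c).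
    apply derivable_pt_lim_plus.
    - apply (D_comp_lin (TT a b) PI (-1) c). now apply TT_deriv.
    - now apply TT_deriv.
    - unfold FF. replace (PI + -1 * c) with (PI - c) by ring. rewrite hh_PI_minus. ring. }
  rewrite TT_0 in H. replace (PI + -1 * 0) with PI in H by ring.
  replace (PI + -1 * x) with (PI - x) in H by ring. lra.
Qed.

Lemma TT_plus_PI a b x : 0 < a -> 0 < b -> 0 <= x ->
  TT a b (x + PI) = TT a b x + TT a b PI.
Proof.
  intros Ha Hb Hx.
  assert (TT a b (PI + 1 * 0) - TT a b 0 = TT a b (PI + 1 * x) - TT a b x).
  { apply mvt_const with (f := fun y => TT a b (PI + 1 * y) - TT a b y); auto.
    intros c _. replace 0 with (1 * FF a b (PI + 1 * c) - FF a b c).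
    apply derivable_pt_lim_minus.
    - apply (D_comp_lin (TT a b) PI 1 c). now apply TT_deriv.
    - now apply TT_deriv.
    - unfold FF. replace (PI + 1 * c) with (c + PI) by ring. rewrite hh_plus_PI. ring. }
  rewrite TT_0 in H. replace (PI + 1 * 0) with PI in H by ring.
  replace (PI + 1 * x) with (x + PI) in H by ring. lra.
Qed.

Lemma TT_swap a b : 0 < a -> 0 < b -> TT b a (PI/2) = TT a b (PI/2).
Proof.
  intros Ha Hb.
  assert (TT b a (PI/2 + -1 * 0) + TT a b 0 = TT b a (PI/2 + -1 * (PI/2)) + TT a b (PI/2)).
  { apply mvt_const with (f := fun y => TT b a (PI/2 + -1 * y) + TT a b y).
    - pose proof PI_RGT_0. lra.
    - intros c _. replace 0 with (-1 * FF b a (PI/2 + -1 * c) + FF a b c).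
      apply derivable_pt_lim_plus.
      + apply (D_comp_lin (TT b a) (PI/2) (-1) c). now apply TT_deriv.
      + now apply TT_deriv.
      + unfold FF. replace (PI/2 + -1 * c) with (PI/2 - c) by ring. rewrite hh_shift. ring. }
  rewrite TT_0 in H. replace (PI/2 + -1 * 0) with (PI/2) in H by ring.
  replace (PI/2 + -1 * (PI/2)) with 0 in H by ring. rewrite TT_0 in H. lra.
Qed.


Lemma D_lin k x : derivable_pt_lim (fun y => y * k) x k.
Proof. apply is_derive_Reals. auto_derive; auto. ring. Qed.

Lemma hh_bounds a b x : 0 < b <= a -> b^2 <= hh a b x <= a^2.
Proof.
  intros Hb. unfold hh. pose proof (sin2_cos2 x) as H. unfold Rsqr in H.
  assert (0 <= sin x * sin x) by nra. assert (0 <= cos x * cos x) by nra.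
  assert (b*b <= a*a) by nra. simpl. split; nra.
Qed.

Lemma FF_bounds a b x : 0 < b <= a -> / a <= FF a b x <= / b.
Proof.
  intros Hb. pose proof (hh_bounds a b x Hb) as [H1 H2]. unfold FF.
  assert (Hs1 : sqrt (b^2) <= sqrt (hh a b x)) by (apply sqrt_le_1_alt; auto).
  assert (Hs2 : sqrt (hh a b x) <= sqrt (a^2)) by (apply sqrt_le_1_alt; auto).
  rewrite sqrt_pow2 in Hs1, Hs2 by lra.
  split; apply Rinv_le_contravar; lra.
Qed.

Lemma TT_bounds a b x : 0 < b <= a -> 0 <= x -> x * / a <= TT a b x <= x * / b.
Proof.
  intros Hb Hx. split.
  - assert (TT a b 0 - 0 * /a <= TT a b x - x * /a) .
    { apply (mvt_incr (fun y => TT a b y - y * /a) (fun y => FF a b y - /a)); auto.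
      + intros c _. apply derivable_pt_lim_minus. apply TT_deriv; lra. apply D_lin.
      + intros c _. cbv beta. pose proof (FF_bounds a b c Hb). lra. }
    rewrite TT_0 in H. lra.
  - assert (0 * /b - TT a b 0 <= x * /b - TT a b x) .
    { apply (mvt_incr (fun y => y * /b - TT a b y) (fun y => /b - FF a b y)); auto.
      + intros c _. apply derivable_pt_lim_minus. apply D_lin. apply TT_deriv; lra.
      + intros c _. cbv beta. pose proof (FF_bounds a b c Hb). lra. }
    rewrite TT_0 in H. lra.
Qed.

Lemma TT_mono a b a' b' x : 0 < a <= a' -> 0 < b <= b' -> 0 <= x -> TT a' b' x <= TT a b x.
Proof.
  intros Ha Hb Hx.
  assert (TT a b 0 - TT a' b' 0 <= TT a b x - TT a' b' x).
  { apply (mvt_incr (fun y => TT a b y - TT a' b' y) (fun y => FF a b y - FF a' b' y)); auto.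
    + intros c _. apply derivable_pt_lim_minus; apply TT_deriv; lra.
    + intros c _. cbv beta. unfold FF.
      assert (0 < hh a b c) by (apply hh_pos; lra).
      assert (hh a b c <= hh a' b' c).
      { unfold hh. pose proof (sin2_cos2 c) as Hsc. unfold Rsqr in Hsc.
        assert (0 <= sin c * sin c) by nra. assert (0 <= cos c * cos c) by nra.
        assert (a*a <= a'*a') by nra. assert (b*b <= b'*b') by nra. simpl. nra. }
      assert (sqrt (hh a b c) <= sqrt (hh a' b' c)) by (apply sqrt_le_1_alt; auto).
      assert (0 < sqrt (hh a b c)) by (apply sqrt_lt_R0; auto).
      assert (/ sqrt (hh a' b' c) <= / sqrt (hh a b c)) by (apply Rinv_le_contravar; lra).
      lra. }
  rewrite !TT_0 in H. lra.
Qed.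


Lemma lim_cont f x l : derivable_pt_lim f x l -> continuity_pt f x.
Proof. intros H. apply (derivable_continuous_pt f x (exist _ l H)). Qed.

Lemma U2_deriv a b x : 0 < a -> 0 < b ->
  is_derive (U2 a b) x ((1 + a*b / hh a b x) * U1 a b x).
Proof.
  intros Ha Hb. pose proof (hh_pos a b x Ha Hb) as Hh.
  unfold U1, U2. unfold hh in *. auto_derive.
  { split. lra. split; auto. apply Rgt_not_eq. apply sqrt_lt_R0. lra. }
  replace (a ^ 2 * cos x ^ 2 + b ^ 2 * sin x ^ 2) with (a * (a * 1) * (cos x * (cos x * 1)) + b * (b * 1) * (sin x * (sin x * 1))) by ring.
  replace (a ^ 2 * cos x ^ 2 + b ^ 2 * sin x ^ 2) with (a * (a * 1) * (cos x * (cos x * 1)) + b * (b * 1) * (sin x * (sin x * 1))) in Hh by ring.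
  set (E := a * (a * 1) * (cos x * (cos x * 1)) + b * (b * 1) * (sin x * (sin x * 1))) in *.
  assert (Hr : sqrt E * sqrt E = E) by (apply sqrt_sqrt; lra).
  assert (Hr0 : 0 < sqrt E) by (apply sqrt_lt_R0; lra).
  pose proof (sin2_cos2 x) as Hsc. unfold Rsqr in Hsc.
  set (r := sqrt E) in *. clearbody r. unfold E in *. clear E.
  field_simplify_eq; try lra.
  assert (Hr2 : r^2 = a * (a * 1) * (cos x * (cos x * 1)) + b * (b * 1) * (sin x * (sin x * 1))) by (rewrite <- Hr; ring).
  rewrite Hr2. clear Hr Hr2 Hr0 Hh. simpl. nsatz.
Qed.

Definition GG a b u := a * b / hh a b u.
Definition psi a b x := x + RInt (GG a b) 0 x.

Lemma GG_cont a b u : 0 < a -> 0 < b -> continuous (GG a b) u.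
Proof.
  intros Ha Hb. apply (ex_derive_continuous (GG a b)). unfold GG.
  pose proof (hh_pos a b u Ha Hb). unfold hh in *. auto_derive. lra.
Qed.

Lemma psi_deriv a b x : 0 < a -> 0 < b -> derivable_pt_lim (psi a b) x (1 + GG a b x).
Proof.
  intros Ha Hb. unfold psi. apply derivable_pt_lim_plus.
  - apply derivable_pt_lim_id.
  - apply FTC0. intros; now apply GG_cont.
Qed.

Lemma psi_0 a b : psi a b 0 = 0.
Proof. unfold psi. rewrite (RInt_point (V:=R_CompleteNormedModule)). unfold zero; simpl. ring. Qed.

Lemma rot_const (p u1 u2 dp : R -> R) x0 x :
  x0 <= x ->
  (forall y, derivable_pt_lim p y (dp y)) ->
  (forall y, derivable_pt_lim u1 y (- dp y * u2 y)) ->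
  (forall y, derivable_pt_lim u2 y (dp y * u1 y)) ->
  cos (p x0) * u1 x0 + sin (p x0) * u2 x0 = cos (p x) * u1 x + sin (p x) * u2 x /\
  sin (p x0) * u1 x0 - cos (p x0) * u2 x0 = sin (p x) * u1 x - cos (p x) * u2 x.
Proof.
  intros Hx Hp H1 H2.
  assert (Hc : forall y, derivable_pt_lim (fun t => cos (p t)) y (- sin (p y) * dp y)).
  { intros y. pose proof (derivable_pt_lim_comp p cos y (dp y) (- sin (p y)) (Hp y) (derivable_pt_lim_cos (p y))) as K.
    unfold comp in K. exact K. }
  assert (Hs : forall y, derivable_pt_lim (fun t => sin (p t)) y (cos (p y) * dp y)).
  { intros y. pose proof (derivable_pt_lim_comp p sin y (dp y) (cos (p y)) (Hp y) (derivable_pt_lim_sin (p y))) as K.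
    unfold comp in K. exact K. }
  split.
  - apply (mvt_const (fun t => cos (p t) * u1 t + sin (p t) * u2 t)); auto.
    intros c _.
    replace 0 with ((- sin (p c) * dp c) * u1 c + cos (p c) * (- dp c * u2 c) +
                    ((cos (p c) * dp c) * u2 c + sin (p c) * (dp c * u1 c))) by ring.
    apply (derivable_pt_lim_plus (fun t => cos (p t) * u1 t) (fun t => sin (p t) * u2 t)).
    + apply (derivable_pt_lim_mult (fun t => cos (p t)) u1); auto.
    + apply (derivable_pt_lim_mult (fun t => sin (p t)) u2); auto.
  - apply (mvt_const (fun t => sin (p t) * u1 t - cos (p t) * u2 t)); auto.
    intros c _.
    replace 0 with ((cos (p c) * dp c) * u1 c + sin (p c) * (- dp c * u2 c) -
                    ((- sin (p c) * dp c) * u2 c + cos (p c) * (dp c * u1 c))) by ring.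
    apply (derivable_pt_lim_minus (fun t => sin (p t) * u1 t) (fun t => cos (p t) * u2 t)).
    + apply (derivable_pt_lim_mult (fun t => sin (p t)) u1); auto.
    + apply (derivable_pt_lim_mult (fun t => cos (p t)) u2); auto.
Qed.

Lemma U_norm a b x : 0 < a -> 0 < b -> U1 a b x ^ 2 + U2 a b x ^ 2 = 1.
Proof.
  intros Ha Hb. pose proof (hh_pos a b x Ha Hb) as Hh.
  unfold U1, U2. 
  assert (Hr : sqrt (hh a b x) * sqrt (hh a b x) = hh a b x) by (apply sqrt_sqrt; lra).
  assert (Hr0 : 0 < sqrt (hh a b x)) by (apply sqrt_lt_R0; lra).
  pose proof (sin2_cos2 x) as Hsc. unfold Rsqr in Hsc.
  set (r := sqrt (hh a b x)) in *. clearbody r. unfold hh in *.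
  field_simplify_eq; try lra.
  assert (Hr2 : r^2 = a ^ 2 * cos x ^ 2 + b ^ 2 * sin x ^ 2) by (rewrite <- Hr; ring).
  rewrite Hr2. simpl. nsatz.
Qed.

Lemma U1_0 a b : 0 < a -> 0 < b -> U1 a b 0 = 1.
Proof.
  intros. unfold U1, hh. rewrite cos_0, sin_0.
  replace (a ^ 2 * 1 ^ 2 + b ^ 2 * 0 ^ 2) with (a^2) by ring.
  rewrite sqrt_pow2 by lra. field. lra.
Qed.

Lemma U2_0 a b : U2 a b 0 = 0.
Proof. unfold U2. rewrite sin_0. unfold Rdiv. ring. Qed.

Lemma psi_cos_sin a b x : 0 < a -> 0 < b -> 0 <= x ->
  cos (psi a b x) = U1 a b x /\ sin (psi a b x) = U2 a b x.
Proof.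
  intros Ha Hb Hx.
  destruct (rot_const (psi a b) (U1 a b) (U2 a b) (fun y => 1 + GG a b y) 0 x Hx) as [E1 E2].
  - intros y; now apply psi_deriv.
  - intros y. apply is_derive_Reals. replace (- (1 + GG a b y) * U2 a b y) with
      (- (1 + a*b / hh a b y) * U2 a b y) by reflexivity. now apply U1_deriv.
  - intros y. apply is_derive_Reals. now apply U2_deriv.
  - rewrite psi_0, cos_0, sin_0, U1_0, U2_0 in E1, E2 by auto.
    pose proof (U_norm a b x Ha Hb).
    set (c := cos (psi a b x)) in *. set (s := sin (psi a b x)) in *.
    set (u := U1 a b x) in *. set (v := U2 a b x) in *.
    simpl in *. split; nsatz.
Qed.


Lemma lin_pos a b x : 0 < a -> 0 < b -> 0 < a * cos x ^ 2 + b * sin x ^ 2.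
Proof.
  intros Ha Hb. pose proof (sin2_cos2 x) as H. unfold Rsqr in H.
  destruct (Req_dec (cos x) 0) as [E|E].
  - rewrite E in *. replace (sin x ^2) with 1 by (simpl; lra). simpl. lra.
  - assert (0 < cos x * cos x) by (apply Rsqr_pos_lt; auto).
    assert (0 <= sin x * sin x) by nra. simpl.
    assert (0 < a * (cos x * cos x)) by (apply Rmult_lt_0_compat; lra).
    assert (0 <= b * (sin x * sin x)) by (apply Rmult_le_pos; lra). nra.
Qed.

Lemma landen_integrand a b x : 0 < a -> 0 < b -> 0 <= x ->
  FF ((a+b)/2) (sqrt (a*b)) (psi a b x) * (1 + GG a b x) = 2 * FF a b x.
Proof.
  intros Ha Hb Hx.
  destruct (psi_cos_sin a b x Ha Hb Hx) as [Ec Es].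
  unfold FF at 1, hh at 1. rewrite Ec, Es.
  pose proof (hh_pos a b x Ha Hb) as Hh.
  pose proof (lin_pos a b x Ha Hb) as HK.
  assert (Hr : sqrt (hh a b x) * sqrt (hh a b x) = hh a b x) by (apply sqrt_sqrt; lra).
  assert (Hr0 : 0 < sqrt (hh a b x)) by (apply sqrt_lt_R0; lra).
  pose proof (sin2_cos2 x) as Hsc. unfold Rsqr in Hsc.
  assert (Hab : sqrt (a*b) ^ 2 = a * b) by (apply pow2_sqrt; nra).
  rewrite Hab.
  unfold U1, U2, FF, GG.
  set (r := sqrt (hh a b x)) in *. clearbody r.
  set (K := a * cos x ^ 2 + b * sin x ^ 2) in *.
  assert (E : ((a + b) / 2) ^ 2 * ((a * cos x ^ 2 - b * sin x ^ 2) / r) ^ 2 +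
     a * b * ((a + b) * sin x * cos x / r) ^ 2 = ((a+b) * K / (2 * r))^2).
  { unfold K. field. lra. }
  rewrite E. rewrite sqrt_pow2.
  2: { apply Rlt_le. unfold Rdiv. apply Rmult_lt_0_compat. nra. apply Rinv_0_lt_compat. lra. }
  assert (Hhk : hh a b x + a * b = (a+b) * K).
  { unfold K, hh. simpl. nsatz. }
  rewrite <- Hr. field_simplify_eq; try (split; lra); try nra.
Qed.

Lemma GG_pos a b x : 0 < a -> 0 < b -> 0 < GG a b x.
Proof. intros. unfold GG. pose proof (hh_pos a b x H H0). unfold Rdiv.
  apply Rmult_lt_0_compat. nra. now apply Rinv_0_lt_compat. Qed.

Lemma psi_PI2 a b : 0 < a -> 0 < b -> psi a b (PI/2) = PI.
Proof.
  intros Ha Hb. pose proof PI_RGT_0 as HPI.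
  assert (Hpos : psi a b 0 < psi a b (PI/2)).
  { apply (mvt_strict _ (fun y => 1 + GG a b y)). lra.
    intros; now apply psi_deriv. intros; pose proof (GG_pos a b c Ha Hb); lra. }
  rewrite psi_0 in Hpos.
  assert (Hcos : cos (psi a b (PI/2)) = -1).
  { destruct (psi_cos_sin a b (PI/2) Ha Hb) as [E _]. lra. rewrite E.
    unfold U1, hh. rewrite cos_PI2, sin_PI2.
    replace (a ^ 2 * 0 ^ 2 + b ^ 2 * 1 ^ 2) with (b^2) by ring.
    rewrite sqrt_pow2 by lra. field. lra. }
  assert (Hle : psi a b (PI/2) <= PI).
  { destruct (Rle_lt_dec (psi a b (PI/2)) PI) as [H|H]; auto. exfalso.
    destruct (IVT_interv (fun y => psi a b y - PI) 0 (PI/2)) as [z [Hz Ez]].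
    - intros y _. apply continuity_pt_minus. apply (lim_cont _ _ (1 + GG a b y)).
      now apply psi_deriv. apply continuity_pt_const. intros u v; auto.
    - lra.
    - rewrite psi_0. lra.
    - lra.
    - assert (z <> 0) by (intro; subst; rewrite psi_0 in Ez; lra).
      assert (z <> PI/2) by (intro; subst; lra).
      destruct (psi_cos_sin a b z Ha Hb) as [_ Es]. lra.
      replace (psi a b z) with PI in Es by lra. rewrite sin_PI in Es.
      unfold U2 in Es.
      assert (0 < sin z) by (apply sin_gt_0; lra).
      assert (0 < cos z) by (apply cos_gt_0; lra).
      assert (0 < sqrt (hh a b z)) by (apply sqrt_lt_R0; apply hh_pos; lra).
      assert (0 < (a + b) * sin z * cos z / sqrt (hh a b z)).
      { unfold Rdiv. apply Rmult_lt_0_compat. apply Rmult_lt_0_compat. apply Rmult_lt_0_compat. lra. lra. lra.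
        now apply Rinv_0_lt_compat. }
      lra. }
  destruct (Req_dec (psi a b (PI/2)) PI) as [E|E]; auto.
  assert (cos PI < cos (psi a b (PI/2))) by (apply cos_decreasing_1; lra).
  rewrite cos_PI in H. lra.
Qed.

Lemma landen a b : 0 < a -> 0 < b ->
  TT a b (PI/2) = TT ((a+b)/2) (sqrt (a*b)) (PI/2).
Proof.
  intros Ha Hb. pose proof PI_RGT_0 as HPI.
  assert (Ha1 : 0 < (a+b)/2) by lra.
  assert (Hb1 : 0 < sqrt (a*b)) by (apply sqrt_lt_R0; nra).
  set (a1 := (a+b)/2) in *. set (b1 := sqrt (a*b)) in *.
  assert (H : TT a1 b1 (psi a b 0) - 2 * TT a b 0 =
              TT a1 b1 (psi a b (PI/2)) - 2 * TT a b (PI/2)).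
  { apply (mvt_const (fun y => TT a1 b1 (psi a b y) - 2 * TT a b y)). lra.
    intros c Hc.
    replace 0 with (FF a1 b1 (psi a b c) * (1 + GG a b c) - (0 * TT a b c + 2 * FF a b c)).
    2: { unfold a1, b1. rewrite landen_integrand by lra. ring. }
    apply (derivable_pt_lim_minus (fun y => TT a1 b1 (psi a b y)) (fun y => 2 * TT a b y)).
    - pose proof (derivable_pt_lim_comp (psi a b) (TT a1 b1) c _ _ (psi_deriv a b c Ha Hb) (TT_deriv a1 b1 (psi a b c) Ha1 Hb1)) as K.
      unfold comp in K. exact K.
    - apply (derivable_pt_lim_mult (fun _ => 2) (TT a b)). apply derivable_pt_lim_const. now apply TT_deriv. }
  rewrite psi_0, psi_PI2, !TT_0 in H by auto.
  assert (E := TT_PI_minus a1 b1 (PI/2) Ha1 Hb1 ltac:(lra)).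
  replace (PI - PI/2) with (PI/2) in E by field. lra.
Qed.


Lemma agm_S a b n : agm_iter a b (S n) =
  ((fst (agm_iter a b n) + snd (agm_iter a b n)) / 2, sqrt (fst (agm_iter a b n) * snd (agm_iter a b n))).
Proof. reflexivity. Qed.

Lemma agm_pos a b n : 0 < a -> 0 < b -> 0 < fst (agm_iter a b n) /\ 0 < snd (agm_iter a b n).
Proof.
  intros Ha Hb. induction n as [|n [IH1 IH2]]; simpl; [lra|].
  split. lra. apply sqrt_lt_R0. nra.
Qed.

Lemma amgm x y : 0 < x -> 0 < y -> sqrt (x * y) <= (x + y) / 2.
Proof.
  intros. rewrite <- (sqrt_pow2 ((x+y)/2)) by lra. apply sqrt_le_1_alt.
  assert (0 <= (x - y)^2) by (apply pow2_ge_0). nra.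
Qed.

Lemma agm_ord a b n : 0 < a -> 0 < b -> snd (agm_iter a b (S n)) <= fst (agm_iter a b (S n)).
Proof.
  intros Ha Hb. rewrite agm_S. cbn [fst snd].
  destruct (agm_pos a b n Ha Hb). now apply amgm.
Qed.

Lemma agm_gap a b n : 0 < a -> 0 < b ->
  fst (agm_iter a b (S (S n))) - snd (agm_iter a b (S (S n))) <=
  (fst (agm_iter a b (S n)) - snd (agm_iter a b (S n))) / 2.
Proof.
  intros Ha Hb. pose proof (agm_ord a b n Ha Hb). pose proof (agm_pos a b (S n) Ha Hb).
  rewrite (agm_S a b (S n)). cbn [fst snd].
  set (x := fst (agm_iter a b (S n))) in *. set (y := snd (agm_iter a b (S n))) in *.
  assert (y <= sqrt (x * y)).
  { rewrite <- (sqrt_pow2 y) at 1 by lra. apply sqrt_le_1_alt. nra. }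
  lra.
Qed.

Lemma agm_TT a b n : 0 < a -> 0 < b ->
  TT (fst (agm_iter a b n)) (snd (agm_iter a b n)) (PI/2) = TT a b (PI/2).
Proof.
  intros Ha Hb. induction n as [|n IH]; [reflexivity|].
  rewrite agm_S. cbn [fst snd]. rewrite <- IH.
  destruct (agm_pos a b n Ha Hb). symmetry. now apply landen.
Qed.

Lemma AGM_TT a b : 0 < a -> 0 < b -> AGM a b = PI / (2 * TT a b (PI/2)).
Proof.
  intros Ha Hb. pose proof PI_RGT_0 as HPI.
  set (j := TT a b (PI/2)).
  assert (Hj : forall n, snd (agm_iter a b (S n)) <= PI / (2 * j) <= fst (agm_iter a b (S n))).
  { intros n. pose proof (agm_ord a b n Ha Hb). pose proof (agm_pos a b (S n) Ha Hb) as [P1 P2].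
    pose proof (TT_bounds (fst (agm_iter a b (S n))) (snd (agm_iter a b (S n))) (PI/2) ltac:(lra) ltac:(lra)) as [B1 B2].
    rewrite agm_TT in B1, B2 by auto. fold j in B1, B2.
    assert (0 < j) by (apply Rlt_le_trans with (2 := B1); apply Rmult_lt_0_compat; [lra| now apply Rinv_0_lt_compat]).
    split.
    - apply (Rmult_le_reg_r (2 * j)). lra. unfold Rdiv. rewrite Rmult_assoc, Rinv_l by lra.
      apply (Rmult_le_compat_l (snd (agm_iter a b (S n)))) in B2; [|lra].
      rewrite <- Rmult_assoc, (Rmult_comm _ (PI/2)), Rmult_assoc, Rinv_r in B2 by lra. lra.
    - apply (Rmult_le_reg_r (2 * j)). lra. unfold Rdiv. rewrite Rmult_assoc, Rinv_l by lra.
      apply (Rmult_le_compat_l (fst (agm_iter a b (S n)))) in B1; [|lra].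
      rewrite <- Rmult_assoc, (Rmult_comm _ (PI/2)), Rmult_assoc, Rinv_r in B1 by lra. lra. }
  set (c := PI / (2 * j)) in *.
  set (d0 := fst (agm_iter a b 1) - snd (agm_iter a b 1)).
  assert (Hd : forall n, fst (agm_iter a b (S n)) - snd (agm_iter a b (S n)) <= d0 * (/2)^n).
  { induction n as [|n IH]. unfold d0. simpl pow. lra.
    pose proof (agm_gap a b n Ha Hb). simpl pow. lra. }
  assert (Hlim : is_lim_seq (fun n => fst (agm_iter a b (S n))) c).
  { apply is_lim_seq_le_le with (u := fun _ => c) (w := fun n => c + d0 * (/2)^n).
    - intros n. specialize (Hj n). specialize (Hd n). lra.
    - apply is_lim_seq_const.
    - replace (Finite c) with (Finite (c + d0 * 0)) by (f_equal; ring).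
      apply is_lim_seq_plus'. apply is_lim_seq_const.
      apply (is_lim_seq_scal_l _ d0 0). apply is_lim_seq_geom. rewrite Rabs_pos_eq; lra. }
  unfold AGM. rewrite (is_lim_seq_unique _ c). reflexivity.
  now apply is_lim_seq_incr_1.
Qed.


Lemma inverse_exists (tau g : R -> R) :
  (forall p, derivable_pt_lim tau p (g p)) -> (forall p, 0 < g p) ->
  (forall t, exists p1 p2, tau p1 <= t <= tau p2) ->
  exists phi : R -> R, (forall t, tau (phi t) = t) /\ (forall p, phi (tau p) = p) /\
    (forall t, derivable_pt_lim phi t (/ g (phi t))).
Proof.
  intros Hd Hg Hs.
  assert (Hinc : forall p q, p < q -> tau p < tau q).
  { intros p q Hpq. apply (mvt_strict tau g); auto. }
  assert (Hcont : forall p, continuity_pt tau p).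
  { intros p. apply (derivable_continuous_pt tau p (exist _ (g p) (Hd p))). }
  assert (Hex : forall t, exists p, tau p = t).
  { intros t. destruct (Hs t) as [p1 [p2 [H1 H2]]].
    destruct (Req_dec (tau p1) t) as [E|E]; [now exists p1|].
    destruct (Req_dec (tau p2) t) as [E'|E']; [now exists p2|].
    assert (p1 < p2).
    { destruct (Rlt_le_dec p1 p2) as [L|L]; auto.
      destruct (Req_dec p1 p2); [subst; lra|]. assert (tau p2 < tau p1) by (apply Hinc; lra). lra. }
    destruct (IVT_interv (fun y => tau y - t) p1 p2) as [z [_ Ez]].
    - intros y _. apply continuity_pt_minus; auto. apply continuity_pt_const. intros u v; auto.
    - auto. - lra. - lra.
    - exists z. lra. }
  set (phi := fun t => proj1_sig (constructive_indefinite_description _ (Hex t))).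
  assert (Hphi : forall t, tau (phi t) = t).
  { intros t. unfold phi. destruct (constructive_indefinite_description _ (Hex t)); auto. }
  assert (Hinj : forall p q, tau p = tau q -> p = q).
  { intros p q E. destruct (Rtotal_order p q) as [L|[L|L]]; auto.
    apply Hinc in L; lra. apply Hinc in L; lra. }
  assert (Hphi2 : forall p, phi (tau p) = p) by (intros; apply Hinj; auto).
  assert (Hmono : forall s s', s <= s' -> phi s <= phi s').
  { intros s s' L. destruct (Rle_lt_dec (phi s) (phi s')) as [K|K]; auto.
    apply Hinc in K. rewrite !Hphi in K. lra. }
  exists phi. split; auto. split; auto.
  intros t.
  assert (Prf : forall a, phi (t-1) <= a <= phi (t+1) -> derivable_pt tau a).
  { intros a _. exact (exist _ (g a) (Hd a)). }
  assert (Prg : continuity_pt phi t).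
  { apply (continuity_pt_recip_interv tau phi (phi t - 1) (phi t + 1)).
    - lra.
    - intros x y _ L _. now apply Hinc.
    - intros x _ _. unfold comp, id. auto.
    - intros x L1 L2. split.
      + rewrite <- (Hphi2 (phi t - 1)). now apply Hmono.
      + rewrite <- (Hphi2 (phi t + 1)). now apply Hmono.
    - intros; auto.
    - split.
      + rewrite <- (Hphi t) at 2. apply Hinc. lra.
      + rewrite <- (Hphi t) at 1. apply Hinc. lra. }
  assert (Hincr : phi (t-1) <= phi t <= phi (t+1)) by (split; apply Hmono; lra).
  pose proof (derivable_pt_lim_recip_interv tau phi (t-1) (t+1) t Prf Prg ltac:(lra) ltac:(lra) Hincr) as K.
  rewrite (derive_pt_eq_0 tau (phi t) (g (phi t)) (Prf (phi t) Hincr) (Hd (phi t))) in K.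
  replace (/ g (phi t)) with (1 / g (phi t)) by (unfold Rdiv; ring).
  apply K.
  - intros x _. unfold comp, id. auto.
  - specialize (Hg (phi t)). lra.
Qed.


Lemma abs_le_inv x c : Rabs x <= c -> - c <= x <= c.
Proof. intros H. pose proof (Rle_abs x). pose proof (Rle_abs (-x)). rewrite Rabs_Ropp in H1. lra. Qed.

Definition Fz (u : R) := - 2 * u * (1 - u ^ 2).

Lemma ode_unique (z dz w dw : R -> R) :
  (forall t, derivable_pt_lim z t (dz t)) -> (forall t, derivable_pt_lim dz t (Fz (z t))) ->
  (forall t, derivable_pt_lim w t (dw t)) -> (forall t, derivable_pt_lim dw t (Fz (w t))) ->
  (forall t, Rabs (z t) <= 1) -> (forall t, Rabs (w t) <= 1) ->
  z 0 = w 0 -> dz 0 = dw 0 -> forall t, 0 <= t -> z t = w t /\ dz t = dw t.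
Proof.
  intros Hz Hdz Hw Hdw Bz Bw E0 E1 t Ht.
  set (Q := fun s => (z s - w s)^2 + (dz s - dw s)^2).
  set (dQ := fun s => 2 * (z s - w s) * (dz s - dw s) + 2 * (dz s - dw s) * (Fz (z s) - Fz (w s))).
  assert (HQ : forall s, derivable_pt_lim Q s (dQ s)).
  { intros s. unfold Q, dQ. apply is_derive_Reals.
    apply (is_derive_plus (fun s => (z s - w s)^2) (fun s => (dz s - dw s)^2)).
    - apply (is_derive_ext (fun s => (z s - w s) * (z s - w s))). intros; simpl; ring.
      replace (2 * (z s - w s) * (dz s - dw s)) with ((dz s - dw s) * (z s - w s) + (z s - w s) * (dz s - dw s)) by ring.
      apply (is_derive_mult (fun s => z s - w s) (fun s => z s - w s)); try (intros; apply Rmult_comm);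
      apply (is_derive_minus z w); apply is_derive_Reals; auto.
    - apply (is_derive_ext (fun s => (dz s - dw s) * (dz s - dw s))). intros; simpl; ring.
      replace (2 * (dz s - dw s) * (Fz (z s) - Fz (w s))) with ((Fz (z s) - Fz (w s)) * (dz s - dw s) + (dz s - dw s) * (Fz (z s) - Fz (w s))) by ring.
      apply (is_derive_mult (fun s => dz s - dw s) (fun s => dz s - dw s)); try (intros; apply Rmult_comm);
      apply (is_derive_minus dz dw); apply is_derive_Reals; auto. }
  assert (Hb : forall s, dQ s <= 5 * Q s).
  { intros s. unfold dQ, Q, Fz.
    pose proof (Bz s) as B1. pose proof (Bw s) as B2.
    apply abs_le_inv in B1. apply abs_le_inv in B2.
    set (x := z s) in *. set (y := w s) in *. set (e := dz s - dw s).
    replace (- 2 * x * (1 - x ^ 2) - - 2 * y * (1 - y ^ 2)) with ((x - y) * (2*(x*x + x*y + y*y) - 2)) by ring.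
    set (m := 2*(x*x + x*y + y*y) - 2).
    assert (-2 <= m <= 4).
    { unfold m. split. nra. nra. }
    set (d := x - y).
    replace (2 * d * e + 2 * e * (d * m)) with (2 * d * e * (1 + m)) by ring.
    assert (0 <= (d - e)^2) by apply pow2_ge_0.
    assert (0 <= (d + e)^2) by apply pow2_ge_0.
    destruct (Rle_dec 0 (d*e)).
    - assert (2*d*e*(1+m) <= 2*d*e*5) by nra. nra.
    - assert (2*d*e*(1+m) <= 2*d*e*(-1)) by nra. nra. }
  set (Rf := fun s => Q s * exp (- 5 * s)).
  assert (HR : Rf t <= Rf 0).
  { assert (- Rf 0 <= - Rf t).
    { apply (mvt_incr (fun s => - Rf s) (fun s => - ((dQ s - 5 * Q s) * exp (-5 * s)))); auto.
      - intros c _. apply derivable_pt_lim_opp. unfold Rf. apply is_derive_Reals.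
        apply (is_derive_ext (fun s => Q s * exp (-5 * s))). reflexivity.
        replace ((dQ c - 5 * Q c) * exp (-5 * c)) with (dQ c * exp (-5*c) + Q c * (-5 * exp (-5 * c))) by ring.
        apply (is_derive_mult Q (fun s => exp (-5 * s))); try (intros; apply Rmult_comm).
        apply is_derive_Reals; auto.
        auto_derive; auto. ring.
      - intros c _. specialize (Hb c). pose proof (exp_pos (-5 * c)). cbv beta. nra. }
    lra. }
  unfold Rf, Q in HR. rewrite E0, E1 in HR.
  replace ((w 0 - w 0) ^ 2 + (dw 0 - dw 0) ^ 2) with 0 in HR by ring.
  pose proof (exp_pos (-5 * t)).
  assert (0 <= (z t - w t)^2) by apply pow2_ge_0.
  assert (0 <= (dz t - dw t)^2) by apply pow2_ge_0.
  assert ((z t - w t)^2 = 0) by nra.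
  assert ((dz t - dw t)^2 = 0) by nra.
  simpl in H2, H3. split; nra.
Qed.


Lemma abs_lt_inv x c : Rabs x < c -> - c < x < c.
Proof. intros H. pose proof (Rle_abs x). pose proof (Rle_abs (-x)). rewrite Rabs_Ropp in H1. lra. Qed.

Lemma loc_pos f x l : derivable_pt_lim f x l -> 0 < l ->
  exists d, 0 < d /\ forall h, 0 < h < d -> f x < f (x + h) /\ f (x - h) < f x.
Proof.
  intros H Hl. destruct (H l Hl) as [[d Hd] Hdd]. simpl in Hdd.
  exists d. split; auto. intros h Hh. split.
  - assert (Hh0 : h <> 0) by lra. assert (Ha : Rabs h < d) by (rewrite Rabs_pos_eq; lra).
    specialize (Hdd h Hh0 Ha). apply abs_lt_inv in Hdd.
    assert (E : f (x + h) - f x = ((f (x + h) - f x) / h) * h) by (field; lra).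
    assert (0 < (f (x + h) - f x) / h) by lra. nra.
  - assert (Hh0 : -h <> 0) by lra. assert (Ha : Rabs (-h) < d) by (rewrite Rabs_Ropp, Rabs_pos_eq; lra).
    specialize (Hdd (-h) Hh0 Ha). apply abs_lt_inv in Hdd.
    assert (E : f (x + - h) - f x = ((f (x + - h) - f x) / - h) * (- h)) by (field; lra).
    assert (0 < (f (x + - h) - f x) / - h) by lra.
    replace (x - h) with (x + - h) by ring. nra.
Qed.

Lemma cont_nbhd f x : continuity_pt f x -> 0 < f x ->
  exists d, 0 < d /\ forall u, Rabs (u - x) < d -> 0 < f u.
Proof.
  intros H Hp. destruct (H (f x) Hp) as [d [Hd Hdd]].
  exists d. split; auto. intros u Hu.
  destruct (Req_dec u x) as [E|E]; [subst; auto|].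
  assert (K : dist R_met (f u) (f x) < f x).
  { apply Hdd. split. unfold D_x, no_cond. split; auto. simpl. unfold R_dist. auto. }
  simpl in K. unfold R_dist in K. apply abs_lt_inv in K. lra.
Qed.

Lemma one_sign (f df : R -> R) t0 b :
  (forall t, derivable_pt_lim f t (df t)) -> t0 < b -> f t0 = 0 ->
  (forall t, t0 <= t < b -> f t = 0 -> 0 < df t) ->
  forall t, t0 < t < b -> 0 < f t.
Proof.
  intros Hd Hb Hf0 Hz t1 Ht1.
  destruct (Rlt_le_dec 0 (f t1)) as [P|P]; auto. exfalso.
  assert (Hc : forall x, continuity_pt f x) by (intros x; apply (derivable_continuous_pt f x (exist _ (df x) (Hd x)))).
  set (S := fun s => t0 <= s <= t1 /\ forall u, t0 < u <= s -> 0 < f u).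
  assert (HS0 : S t0) by (split; [lra| intros; lra]).
  assert (Hbd : bound S) by (exists t1; intros s [Hs _]; lra).
  destruct (completeness S Hbd (ex_intro _ t0 HS0)) as [s [Hub Hlub]].
  assert (Hst1 : s <= t1) by (apply Hlub; intros u [Hu _]; lra).
  assert (HA : forall u, t0 < u < s -> 0 < f u).
  { intros u Hu. destruct (Rlt_le_dec u s) as [_|K]; [|lra].
    assert (~ is_upper_bound S u) as NU.
    { intros HU. specialize (Hlub u HU). lra. }
    destruct (Classical_Pred_Type.not_all_ex_not _ _ NU) as [v Hv].
    apply Classical_Prop.imply_to_and in Hv. destruct Hv as [[Hv1 Hv2] Hv3].
    apply Hv2. lra. }
  destruct (loc_pos f t0 (df t0) (Hd t0) (Hz t0 ltac:(lra) Hf0)) as [d [Hd0 Hdd]].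
  set (h0 := Rmin (d/2) ((t1 - t0)/2)).
  assert (Hh0 : 0 < h0 <= d/2 /\ h0 <= (t1 - t0)/2).
  { unfold h0. split; [split|]. apply Rmin_pos; lra. apply Rmin_l. apply Rmin_r. }
  assert (HSh : S (t0 + h0)).
  { split. lra. intros u Hu. replace u with (t0 + (u - t0)) by ring.
    destruct (Hdd (u - t0)) as [K _]; lra. }
  assert (Hs0 : t0 + h0 <= s) by (apply Hub; auto).
  assert (Hge : 0 <= f s).
  { destruct (Rle_lt_dec 0 (f s)) as [K|K]; auto. exfalso.
    destruct (cont_nbhd (fun u => - f u) s) as [e [He Hee]].
    - apply continuity_pt_opp. auto.
    - lra.
    - set (u := Rmax (s - e/2) ((t0 + s)/2)).
      assert (s - e/2 <= u) by apply Rmax_l. assert ((t0+s)/2 <= u) by apply Rmax_r.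
      assert (u < s) by (unfold u; apply Rmax_lub_lt; lra).
      assert (0 < f u) by (apply HA; lra).
      assert (0 < - f u) by (apply Hee; rewrite Rabs_left; lra). lra. }
  assert (Hle : f s <= 0).
  { destruct (Rle_lt_dec (f s) 0) as [K|K]; auto. exfalso.
    assert (s < t1) by (destruct (Req_dec s t1); [subst; lra| lra]).
    destruct (cont_nbhd f s (Hc s) K) as [e [He Hee]].
    set (s' := Rmin (s + e/2) t1).
    assert (s' <= s + e/2) by apply Rmin_l. assert (s' <= t1) by apply Rmin_r.
    assert (s < s') by (unfold s'; apply Rmin_glb_lt; lra).
    assert (S s').
    { split. lra. intros u Hu. destruct (Rlt_le_dec u s) as [K1|K1].
      - apply HA; lra.
      - apply Hee. rewrite Rabs_pos_eq; lra. }
    assert (s' <= s) by (apply Hub; auto). lra. }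
  assert (Hfs : f s = 0) by lra.
  destruct (loc_pos f s (df s) (Hd s) (Hz s ltac:(lra) Hfs)) as [d2 [Hd2 Hdd2]].
  set (h := Rmin (d2/2) ((s - t0)/2)).
  assert (0 < h <= d2/2 /\ h <= (s - t0)/2).
  { unfold h. split; [split|]. apply Rmin_pos; lra. apply Rmin_l. apply Rmin_r. }
  destruct (Hdd2 h) as [_ K]. lra.
  assert (0 < f (s - h)) by (apply HA; lra). lra.
Qed.


Lemma Hfun_deriv a b k p : 0 < a -> 0 < b -> b^2 = (1 + 2 * a^2) / 4 -> k^2 = 1 - 2 * a^2 ->
  is_derive (fun p => k * cos p * (2 * sqrt (hh b a p))) p (Fz (k * sin p) / (2 * sqrt (hh b a p))).
Proof.
  intros Ha Hb Eb Ek. pose proof (hh_pos b a p Hb Ha) as Hh.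
  unfold Fz, hh in *. auto_derive.
  { lra. }
  replace (b ^ 2 * cos p ^ 2 + a ^ 2 * sin p ^ 2) with (b * (b * 1) * (cos p * (cos p * 1)) + a * (a * 1) * (sin p * (sin p * 1))) by ring.
  replace (b ^ 2 * cos p ^ 2 + a ^ 2 * sin p ^ 2) with (b * (b * 1) * (cos p * (cos p * 1)) + a * (a * 1) * (sin p * (sin p * 1))) in Hh by ring.
  set (E := b * (b * 1) * (cos p * (cos p * 1)) + a * (a * 1) * (sin p * (sin p * 1))) in *.
  assert (Hr : sqrt E * sqrt E = E) by (apply sqrt_sqrt; lra).
  assert (Hr0 : 0 < sqrt E) by (apply sqrt_lt_R0; lra).
  pose proof (sin2_cos2 p) as Hsc. unfold Rsqr in Hsc.
  set (r := sqrt E) in *. clearbody r. unfold E in *. clear E.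
  field_simplify_eq; try lra.
  assert (Hr2 : r^2 = b * (b * 1) * (cos p * (cos p * 1)) + a * (a * 1) * (sin p * (sin p * 1))) by (rewrite <- Hr; ring).
  rewrite ?Hr2. clear Hr Hr2 Hr0 Hh.
  assert (Eb2 : 4 * (b * b) = 1 + 2 * (a * a)) by (simpl in Eb; lra).
  assert (Ek2 : k * k = 1 - 2 * (a * a)) by (simpl in Ek; lra). clear Eb Ek. simpl. clear r Ha Hb.
  replace (k * (k * (k * 1))) with (k * (k * k)) by ring. rewrite Ek2.
  replace (b * (b * 1)) with ((1 + 2 * (a * a)) / 4) by lra. field_simplify_eq. simpl. nsatz.
Qed.

Lemma TT_neg a b x : 0 < b <= a -> x <= 0 -> TT a b x <= x * / a.
Proof.
  intros Hb Hx.
  assert (TT a b x - x * /a <= TT a b 0 - 0 * /a).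
  { apply (mvt_incr (fun y => TT a b y - y * /a) (fun y => FF a b y - /a)); auto.
    + intros c _. apply derivable_pt_lim_minus. apply TT_deriv; lra. apply D_lin.
    + intros c _. cbv beta. pose proof (FF_bounds a b c Hb). lra. }
  rewrite TT_0 in H. lra.
Qed.

Lemma const_all f : (forall t, derivable_pt_lim f t 0) -> forall t, f t = f 0.
Proof.
  intros H t. destruct (Rle_lt_dec 0 t).
  - symmetry. apply mvt_const; auto.
  - apply mvt_const; auto. lra.
Qed.

Lemma system_conserv x y z : solves_system x y z ->
  (forall t, x t * y t = x 0 * y 0) /\
  (forall t, x t ^ 2 + y t ^ 2 + z t ^ 2 = x 0 ^ 2 + y 0 ^ 2 + z 0 ^ 2).
Proof.
  intros Hs. split.
  - apply (const_all (fun t => x t * y t)). intros t.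
    destruct (Hs t) as [H1 [H2 _]].
    replace 0 with (- (x t * z t) * y t + x t * (y t * z t)) by ring.
    apply (derivable_pt_lim_mult x y); auto.
  - intros t0.
    assert (K : forall t, x t * x t + y t * y t + z t * z t = x 0 * x 0 + y 0 * y 0 + z 0 * z 0).
    { apply (const_all (fun t => x t * x t + y t * y t + z t * z t)). intros t.
      destruct (Hs t) as [H1 [H2 H3]].
      replace 0 with ((- (x t * z t) * x t + x t * - (x t * z t)) + (y t * z t * y t + y t * (y t * z t))
                   + ((x t ^ 2 - y t ^ 2) * z t + z t * (x t ^ 2 - y t ^ 2))) by ring.
      apply (derivable_pt_lim_plus (fun t => x t * x t + y t * y t) (fun t => z t * z t)).
      apply (derivable_pt_lim_plus (fun t => x t * x t) (fun t => y t * y t)).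
      all: apply derivable_pt_lim_mult; auto. }
    specialize (K t0). simpl. lra.
Qed.


Lemma D_scal (f : R -> R) c x l : derivable_pt_lim f x l -> derivable_pt_lim (fun y => c * f y) x (c * l).
Proof.
  intros H. replace (c * l) with (0 * f x + c * l) by ring.
  apply (derivable_pt_lim_mult (fun _ => c) f). apply derivable_pt_lim_const. auto.
Qed.

Definition betaf (al : R) := / 2 * sqrt (1 + 2 * al ^ 2).

Lemma sol_props L x y z : is_sol_L L x y z ->
  exists al Q dz, 0 < al /\ 2 * al^2 < 1 /\ L = 4 * Q /\ 0 < Q /\
   L = 2 * TT al (betaf al) (PI/2) /\
   (forall t, derivable_pt_lim z t (dz t)) /\
   (forall t, dz t ^ 2 = (1 - z t ^ 2) ^ 2 - 4 * al ^ 4) /\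
   z 0 = 0 /\ 0 < dz 0 /\
   (forall t, 0 < t < Q -> 0 < dz t) /\ dz Q = 0 /\
   (forall t, Q < t < 3 * Q -> dz t < 0) /\ dz (3 * Q) = 0 /\
   (forall t, 3 * Q < t < 4 * Q -> 0 < dz t) /\
   (forall t, 2 * Q < t < 4 * Q -> z t < 0) /\ z (4 * Q) = 0.
Proof.
  intros [al [x0 [y0 [Hal [Hal2 [HL [Hxy [Hy0 [Hn [Hp [Ex [Ey [Ez Hs]]]]]]]]]]]]].
  destruct (system_conserv x y z Hs) as [C1 C2].
  rewrite Ex, Ey, Ez, Hp in *. rewrite Hn in C2.
  assert (Hal2' : 2 * al ^ 2 < 1).
  { assert (0 < sqrt 2) by (apply sqrt_lt_R0; lra).
    assert (al * sqrt 2 < 1).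
    { apply (Rmult_lt_compat_r (sqrt 2)) in Hal2; auto. rewrite Rinv_l in Hal2; lra. }
    assert (sqrt 2 * sqrt 2 = 2) by (apply sqrt_sqrt; lra).
    assert (0 < al * sqrt 2) by nra. simpl. nra. }
  set (b := betaf al).
  assert (Hb2 : b ^ 2 = (1 + 2 * al ^ 2) / 4).
  { unfold b, betaf. rewrite Rpow_mult_distr, pow2_sqrt. field. nra. }
  assert (Hb : 0 < b).
  { unfold b, betaf. apply Rmult_lt_0_compat. lra. apply sqrt_lt_R0. nra. }
  assert (Hab : al <= b).
  { destruct (Rle_lt_dec al b); auto. simpl in Hb2. nra. }
  set (k := sqrt (1 - 2 * al ^ 2)).
  assert (Hk2 : k ^ 2 = 1 - 2 * al ^ 2) by (unfold k; rewrite pow2_sqrt; lra).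
  assert (Hk : 0 < k) by (unfold k; apply sqrt_lt_R0; lra).
  assert (Hk1 : k <= 1) by (simpl in Hk2; nra).
  set (tau := fun p => / 2 * TT b al p).
  set (g := fun p => / 2 * FF b al p).
  assert (Hg : forall p, 0 < g p).
  { intros p. unfold g, FF. apply Rmult_lt_0_compat. lra. apply Rinv_0_lt_compat.
    apply sqrt_lt_R0. apply hh_pos; lra. }
  assert (Htau : forall p, derivable_pt_lim tau p (g p)).
  { intros p. unfold tau, g. apply D_scal. apply TT_deriv; lra. }
  assert (Hsurj : forall t, exists p1 p2, tau p1 <= t <= tau p2).
  { intros t. destruct (Rle_lt_dec 0 t).
    - exists 0, (2 * b * t). unfold tau. rewrite TT_0.
      pose proof (TT_bounds b al (2 * b * t) ltac:(lra) ltac:(nra)) as [B1 _].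
      replace (2 * b * t * / b) with (2 * t) in B1 by (field; lra). lra.
    - exists (2 * b * t), 0. unfold tau. rewrite TT_0.
      pose proof (TT_neg b al (2 * b * t) ltac:(lra) ltac:(nra)) as B1.
      replace (2 * b * t * / b) with (2 * t) in B1 by (field; lra). lra. }
  destruct (inverse_exists tau g Htau Hg Hsurj) as [phi [Hphi1 [Hphi2 Hphid]]].
  assert (Hphid' : forall t, derivable_pt_lim phi t (2 * sqrt (hh b al (phi t)))).
  { intros t. replace (2 * sqrt (hh b al (phi t))) with (/ g (phi t)). auto.
    unfold g, FF. assert (0 < sqrt (hh b al (phi t))) by (apply sqrt_lt_R0; apply hh_pos; lra).
    field. lra. }
  assert (Htinc : forall p q, p < q -> tau p < tau q).
  { intros p q Hpq. apply (mvt_strict tau g); auto. }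
  assert (Hpinc : forall s s', s < s' -> phi s < phi s').
  { intros s s' Lss. destruct (Rlt_le_dec (phi s) (phi s')) as [K|K]; auto.
    destruct (Req_dec (phi s) (phi s')) as [E|E].
    - rewrite <- (Hphi1 s), <- (Hphi1 s'), E in Lss. lra.
    - assert (tau (phi s') < tau (phi s)) by (apply Htinc; lra). rewrite !Hphi1 in H. lra. }
  set (w := fun t => k * sin (phi t)).
  set (Hf := fun p => k * cos p * (2 * sqrt (hh b al p))).
  set (dw := fun t => Hf (phi t)).
  assert (Hw : forall t, derivable_pt_lim w t (dw t)).
  { intros t. unfold w, dw, Hf.
    replace (k * cos (phi t) * (2 * sqrt (hh b al (phi t)))) with (k * (cos (phi t) * (2 * sqrt (hh b al (phi t))))) by ring.
    apply D_scal.
    pose proof (derivable_pt_lim_comp phi sin t _ _ (Hphid' t) (derivable_pt_lim_sin (phi t))) as K.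
    unfold comp in K. exact K. }
  assert (Hdw : forall t, derivable_pt_lim dw t (Fz (w t))).
  { intros t. unfold dw.
    assert (K1 := Hfun_deriv al b k (phi t) Hal Hb Hb2 Hk2). apply is_derive_Reals in K1.
    pose proof (derivable_pt_lim_comp phi Hf t _ _ (Hphid' t) K1) as K.
    unfold comp in K. unfold w.
    replace (Fz (k * sin (phi t))) with ((Fz (k * sin (phi t)) / (2 * sqrt (hh b al (phi t)))) * (2 * sqrt (hh b al (phi t)))).
    exact K.
    assert (0 < sqrt (hh b al (phi t))) by (apply sqrt_lt_R0; apply hh_pos; lra).
    field. lra. }
  set (dz := fun t => x t * x t - y t * y t).
  assert (Hz : forall t, derivable_pt_lim z t (dz t)).
  { intros t. destruct (Hs t) as [_ [_ H3]]. unfold dz. replace (x t * x t - y t * y t) with (x t ^ 2 - y t ^ 2) by ring. auto. }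
  assert (Hdz : forall t, derivable_pt_lim dz t (Fz (z t))).
  { intros t. destruct (Hs t) as [H1 [H2 _]]. unfold dz, Fz.
    specialize (C2 t).
    replace (-2 * z t * (1 - z t ^ 2)) with ((- (x t * z t) * x t + x t * - (x t * z t)) - (y t * z t * y t + y t * (y t * z t))).
    2: { replace (1 - z t ^ 2) with (x t ^ 2 + y t ^ 2) by (simpl in *; lra). ring. }
    apply (derivable_pt_lim_minus (fun t => x t * x t) (fun t => y t * y t));
    apply derivable_pt_lim_mult; auto. }
  assert (Bz : forall t, Rabs (z t) <= 1).
  { intros t. specialize (C2 t). apply Rabs_le. simpl in C2.
    assert (0 <= x t * x t) by nra. assert (0 <= y t * y t) by nra. split; nra. }
  assert (Bw : forall t, Rabs (w t) <= 1).
  { intros t. unfold w. pose proof (SIN_bound (phi t)). apply Rabs_le. split; nra. }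
  assert (Htau0 : tau 0 = 0) by (unfold tau; rewrite TT_0; ring).
  assert (Hphi0 : phi 0 = 0) by (rewrite <- Htau0 at 1; apply Hphi2).
  assert (Hdz0 : dz 0 = dw 0).
  { unfold dz, dw, Hf. rewrite Ex, Ey, Hphi0, cos_0.
    unfold hh. rewrite cos_0, sin_0.
    replace (b ^ 2 * 1 ^ 2 + al ^ 2 * 0 ^ 2) with (b ^ 2) by ring. rewrite sqrt_pow2 by lra.
    assert (E1 : (x0 * x0 - y0 * y0) ^ 2 = 1 - 4 * al ^ 4).
    { replace ((x0 * x0 - y0 * y0) ^ 2) with ((x0^2 + y0^2)^2 - 4 * (x0 * y0)^2) by ring.
      rewrite Hn, Hp. ring. }
    assert (E2 : (k * 1 * (2 * b)) ^ 2 = 1 - 4 * al ^ 4).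
    { replace ((k * 1 * (2 * b)) ^ 2) with (4 * k^2 * b^2) by ring. rewrite Hk2, Hb2. field. }
    assert (0 < x0 * x0 - y0 * y0) by nra.
    assert (0 < k * 1 * (2 * b)) by nra.
    simpl in E1, E2. nra. }
  assert (Hzw : forall t, 0 <= t -> z t = w t /\ dz t = dw t).
  { apply ode_unique; auto. unfold w. rewrite Hphi0, sin_0. lra. }
  pose proof PI_RGT_0 as HPI.
  set (Q := tau (PI/2)).
  assert (T1 : tau PI = 2 * Q).
  { unfold Q, tau. pose proof (TT_PI_minus b al (PI/2) Hb Hal ltac:(lra)) as E.
    replace (PI - PI/2) with (PI/2) in E by field. lra. }
  assert (T2 : tau (3 * (PI/2)) = 3 * Q).
  { pose proof (TT_plus_PI b al (PI/2) Hb Hal ltac:(lra)) as E.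
    assert (E' : tau (PI/2 + PI) = tau (PI/2) + tau PI) by (unfold tau; rewrite E; ring).
    replace (PI/2 + PI) with (3 * (PI/2)) in E' by field. rewrite E', T1. unfold Q. ring. }
  assert (T3 : tau (2 * PI) = 4 * Q).
  { pose proof (TT_plus_PI b al PI Hb Hal ltac:(lra)) as E.
    assert (E' : tau (PI + PI) = tau PI + tau PI) by (unfold tau; rewrite E; ring).
    replace (PI + PI) with (2 * PI) in E' by ring. rewrite E', T1. ring. }
  assert (P1 : phi Q = PI/2) by apply Hphi2.
  assert (P2 : phi (2 * Q) = PI) by (rewrite <- T1; apply Hphi2).
  assert (P3 : phi (3 * Q) = 3 * (PI/2)) by (rewrite <- T2; apply Hphi2).
  assert (P4 : phi (4 * Q) = 2 * PI) by (rewrite <- T3; apply Hphi2).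
  assert (HQ : 0 < Q) by (rewrite <- Htau0; apply Htinc; lra).
  assert (HLQ : L = 2 * TT al b (PI/2)).
  { rewrite <- HL. unfold L_of. fold (betaf al). fold b. rewrite AGM_TT by lra.
    assert (0 < TT al b (PI/2)).
    { pose proof (TT_bounds b al (PI/2) ltac:(lra) ltac:(lra)) as [B1 _].
      rewrite TT_swap in B1 by lra. assert (0 < PI/2 * /b) by (apply Rmult_lt_0_compat; [lra|now apply Rinv_0_lt_compat]). lra. }
    field. split; lra. }
  assert (HL4 : L = 4 * Q).
  { rewrite HLQ. unfold Q, tau. rewrite TT_swap by lra. field. }
  assert (Hsq : forall t, 0 < sqrt (hh b al (phi t))) by (intros; apply sqrt_lt_R0; apply hh_pos; lra).
  assert (Hdzf : forall t, 0 <= t -> dz t = k * cos (phi t) * (2 * sqrt (hh b al (phi t)))).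
  { intros t Ht. destruct (Hzw t Ht) as [_ E]. rewrite E. reflexivity. }
  exists al, Q, dz.
  split; [lra|]. split; [lra|]. split; [lra|]. split; [lra|]. split; [exact HLQ|].
  split; [exact Hz|].
  split.
  { intros t. unfold dz. specialize (C1 t). specialize (C2 t).
    replace ((x t * x t - y t * y t) ^ 2) with ((x t ^ 2 + y t ^ 2) ^ 2 - 4 * (x t * y t) ^ 2) by ring.
    rewrite C1. replace (x t ^ 2 + y t ^ 2) with (1 - z t ^ 2) by (simpl in *; lra). ring. }
  split; [lra|].
  split.
  { rewrite Hdzf by lra. rewrite Hphi0, cos_0. specialize (Hsq 0). rewrite Hphi0 in Hsq. nra. }
  split.
  { intros t Ht. rewrite Hdzf by lra.
    assert (phi 0 < phi t) by (apply Hpinc; lra). assert (phi t < phi Q) by (apply Hpinc; lra).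
    assert (0 < cos (phi t)) by (apply cos_gt_0; lra). specialize (Hsq t).
    apply Rmult_lt_0_compat. nra. lra. }
  split.
  { rewrite Hdzf by lra. rewrite P1, cos_PI2. ring. }
  split.
  { intros t Ht. rewrite Hdzf by lra.
    assert (phi Q < phi t) by (apply Hpinc; lra). assert (phi t < phi (3 * Q)) by (apply Hpinc; lra).
    assert (cos (phi t) < 0) by (apply cos_lt_0; lra). specialize (Hsq t).
    assert (k * cos (phi t) < 0) by nra. nra. }
  split.
  { rewrite Hdzf by lra. rewrite P3. replace (3 * (PI/2)) with (PI/2 + PI) by field.
    rewrite neg_cos, cos_PI2. ring. }
  split.
  { intros t Ht. rewrite Hdzf by lra.
    assert (phi (3 * Q) < phi t) by (apply Hpinc; lra). assert (phi t < phi (4 * Q)) by (apply Hpinc; lra).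
    assert (0 < cos (phi t)).
    { replace (phi t) with ((phi t - 2 * PI) + 2 * INR 1 * PI) by (simpl; ring).
      rewrite cos_period. apply cos_gt_0; lra. }
    specialize (Hsq t). apply Rmult_lt_0_compat. nra. lra. }
  split.
  { intros t Ht. destruct (Hzw t ltac:(lra)) as [E _]. rewrite E. unfold w.
    assert (phi (2 * Q) < phi t) by (apply Hpinc; lra). assert (phi t < phi (4 * Q)) by (apply Hpinc; lra).
    assert (sin (phi t) < 0) by (apply sin_lt_0; lra). nra. }
  { destruct (Hzw (4 * Q) ltac:(lra)) as [E _]. rewrite E. unfold w. rewrite P4, sin_2PI. ring. }
Qed.


Theorem lemma8p8 :
  forall (L M : R) (xL yL zL xM yM zM : R -> R),
    PI * sqrt 2 < L -> L < M ->
    is_sol_L L xL yL zL -> is_sol_L M xM yM zM ->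
    forall t1 t2 : R,
      0 < t1 < L -> 0 < t2 < L ->
      zM t1 = zL t1 -> zM t2 = zL t2 -> t1 = t2.
Proof.
  intros L M xL yL zL xM yM zM HPL HLM SL SM t1 t2 Ht1 Ht2 E1 E2.
  destruct (sol_props L xL yL zL SL) as [aL [QL [dzL [HaL [HaL2 [HL4 [HQL [HLT [HdL [HenL [HzL0 [HdL0 [_ [_ [_ [_ [_ [_ HzL4]]]]]]]]]]]]]]]]]].
  destruct (sol_props M xM yM zM SM) as [aM [QM [dzM [HaM [HaM2 [HM4 [HQM [HMT [HdM [HenM [HzM0 [HdM0 [S1 [S2 [S3 [S4 [S5 [S6 _]]]]]]]]]]]]]]]]]].
  assert (Halpha : aM < aL).
  { destruct (Rlt_le_dec aM aL) as [K|K]; auto. exfalso.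
    assert (betaf aL <= betaf aM).
    { unfold betaf. apply Rmult_le_compat_l. lra. apply sqrt_le_1_alt.
      assert (aL * aL <= aM * aM) by nra. simpl. nra. }
    assert (0 < betaf aL).
    { unfold betaf. apply Rmult_lt_0_compat. lra. apply sqrt_lt_R0. nra. }
    pose proof (TT_mono aL (betaf aL) aM (betaf aM) (PI/2) ltac:(lra) ltac:(lra)) as T.
    pose proof PI_RGT_0. specialize (T ltac:(lra)). lra. }
  assert (Ha4 : aM ^ 4 < aL ^ 4).
  { assert (aM * aM < aL * aL) by nra. simpl. nra. }
  set (f := fun t => zM t - zL t).
  set (df := fun t => dzM t - dzL t).
  assert (Hf : forall t, derivable_pt_lim f t (df t)).
  { intros t. apply (derivable_pt_lim_minus zM zL); auto. }
  assert (Z : forall t, f t = 0 -> dzM t <> 0 /\ (0 < dzM t -> 0 < df t) /\ (dzM t < 0 -> df t < 0)).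
  { intros t Ft. unfold f in Ft. assert (Ez : zM t = zL t) by lra.
    specialize (HenL t). specialize (HenM t). rewrite Ez in HenM.
    assert (D : dzM t ^ 2 - dzL t ^ 2 > 0) by lra. simpl in D. unfold df.
    split; [|split]; intros; nra. }
  assert (Hdf0 : 0 < df 0).
  { specialize (HenL 0). specialize (HenM 0). rewrite HzL0 in HenL. rewrite HzM0 in HenM.
    unfold df. simpl in *. nra. }
  assert (Hf0 : f 0 = 0) by (unfold f; rewrite HzL0, HzM0; ring).
  assert (R1 : forall t, 0 < t < QM -> 0 < f t).
  { apply (one_sign f df 0 QM Hf ltac:(lra) Hf0).
    intros t Ht Ft. destruct (Req_dec t 0) as [E|E]. subst; auto.
    destruct (Z t Ft) as [_ [K _]]. apply K. apply S1. lra. }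
  assert (Loc : forall t, 0 < t < L -> f t = 0 -> QM < t < 3 * QM).
  { intros t Ht Ft. destruct (Z t Ft) as [Nz [Kp Kn]].
    destruct (Rle_lt_dec t QM) as [K1|K1].
    { destruct (Req_dec t QM) as [E|E]. subst. contradiction.
      specialize (R1 t ltac:(lra)). lra. }
    destruct (Rlt_le_dec t (3 * QM)) as [K2|K2]. lra.
    destruct (Req_dec t (3 * QM)) as [E|E]. subst. contradiction.
    exfalso.
    assert (R3 : forall s, t < s < 4 * QM -> 0 < f s).
    { apply (one_sign f df t (4 * QM) Hf ltac:(lra) Ft).
      intros s Hs Fs. destruct (Z s Fs) as [_ [K _]]. apply K. apply S5. lra. }
    specialize (R3 L ltac:(lra)). unfold f in R3. rewrite HL4 in R3 at 2. rewrite HzL4 in R3.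
    specialize (S6 L ltac:(lra)). lra. }
  assert (Uniq : forall u v, 0 < u < L -> 0 < v < L -> f u = 0 -> f v = 0 -> u < v -> False).
  { intros u v Hu Hv Fu Fv Luv.
    pose proof (Loc u Hu Fu). pose proof (Loc v Hv Fv).
    assert (R2 : forall s, u < s < 3 * QM -> 0 < (fun t => - f t) s).
    { apply (one_sign (fun t => - f t) (fun t => - df t) u (3 * QM)).
      - intros t. apply derivable_pt_lim_opp. auto.
      - lra.
      - cbv beta. rewrite Fu. ring.
      - intros s Hs Fs. cbv beta in *. assert (f s = 0) by lra.
        destruct (Z s H1) as [_ [_ K]]. assert (df s < 0) by (apply K; apply S3; lra). lra. }
    specialize (R2 v ltac:(lra)). cbv beta in R2. lra. }
  assert (F1 : f t1 = 0) by (unfold f; lra).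
  assert (F2 : f t2 = 0) by (unfold f; lra).
  destruct (Rtotal_order t1 t2) as [K|[K|K]]; auto.
  - exfalso. apply (Uniq t1 t2); auto.
  - exfalso. apply (Uniq t2 t1); auto.
Qed.
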